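(* Let $N=2^n$ with $n\ge 2$, let $\mathbf{s}$ be a Zadoff–Chu sequence of length $N$, and let $\pi(x)=a_mx^m+\dots+a_1x+a_0\in\mathbb{Z}_N[x]$ be a permutation polynomial over $\mathbb{Z}_N$ (equivalently, $a_1$ is odd, $a_2+a_4+a_6+\cdots$ is even and $a_3+a_5+a_7+\cdots$ is even). Then (i) $\mathbf{s}\circ\pi$ is a CAZAC sequence, and (ii) $\mathbf{s}\circ\pi^{-1}$ is a CAZAC sequence.
   Context: $\xi_N=e^{-2\pi\sqrt{-1}/N}$, and $\xi_N^{x/2}$ means $e^{-\pi\sqrt{-1}x/N}$. A Zadoff–Chu sequence of length $N$ is $\mathbf{s}$ with $s(k)=\xi_N^{u(k^2+(N\bmod 2)k+2lk)/2}$, $0\le k<N$, where $\gcd(u,N)=1$ and $l$ is an integer. A permutation polynomial over $\mathbb{Z}_N$ is a polynomial inducing a bijection $k\mapsto\pi(k)\bmod N$ of $\mathbb{Z}_N$; $\pi^{-1}$ is the inverse permutation. $(\mathbf{s}\circ\sigma)(k)=s(\sigma(k))$. A sequence is CAZAC if all entries have modulus 1 and its periodic auto-correlation $\theta(d)=\sum_{k=0}^{N-1}y(k)y^*(k+d)$ (indices mod $N$) vanishes for all $0<d<N$. *)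

(* Defs.v *)
From HB Require Import structures.
From mathcomp Require Import all_boot all_order all_algebra all_field.
Set Implicit Arguments. Unset Strict Implicit. Unset Printing Implicit Defensive.
Import Order.TTheory GRing.Theory Num.Theory.
Local Open Scope ring_scope.

(* xi_N^(1/2) = e^{-pi i / N}.  N.-root (-1) is the N-th root of -1 with
   minimal nonnegative argument, i.e. e^{pi i / N}; its inverse is e^{-pi i/N}. *)
Definition halfxi (N : nat) : algC := (N.-root (-1))^-1.

(* Zadoff--Chu sequence of length N with root u and shift l:
   s(k) = xi_N^{u(k^2 + (N mod 2) k + 2 l k)/2}, indices k in [0, N). *)
Definition zc (N : nat) (u l : int) (k : nat) : algC :=
  halfxi N ^ (u * ((k%:Z) ^+ 2 + ((N %% 2)%N)%:Z * k%:Z + 2 * l * k%:Z)).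

(* The map k |-> pi(k) mod N induced by an integer polynomial on Z_N
   (coefficients are taken as integers, reduced mod N on evaluation). *)
Definition ppeval (N : nat) (p : {poly int}) (k : nat) : nat :=
  absz ((p.[k%:Z]) %% N%:Z)%Z.

(* p is a permutation polynomial over Z_N: it induces a bijection of
   {0,...,N-1} (the induced map lands in [0,N) for N>0, so injectivity on
   [0,N) is bijectivity). *)
Definition perm_poly (N : nat) (p : {poly int}) : Prop :=
  {in [pred k | (k < N)%N] &, injective (ppeval N p)}.

Definition ppinv (N : nat) (p : {poly int}) (k : nat) : nat :=
  index k (map (ppeval N p) (iota 0 N)).

Definition autocorr (N : nat) (y : nat -> algC) (d : nat) : algC :=
  \sum_(k < N) y k * (y ((k + d) %% N)%N)^*.

Definition CAZAC (N : nat) (y : nat -> algC) : Prop :=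
  (forall k, (k < N)%N -> `|y k| = 1) /\
  (forall d, (0 < d < N)%N -> autocorr N y d = 0).

(* Main.v *)
Require Import Defs.
From HB Require Import structures.
From mathcomp Require Import all_boot all_order all_algebra all_field all_fingroup.
From mathcomp Require Import zify ring lra.
Import Order.TTheory GRing.Theory Num.Theory.
Local Open Scope ring_scope.

Definition oddz (v : int) := exists w, v = 2 * w + 1.

Definition Rp (F : {poly int}) (y : int) : {poly int} :=
  \sum_(i < size F) F^`N(i.+2) * (y ^+ i)%:P.

Lemma taylor2 (F : {poly int}) (z y : int) :
  F.[z + y] = F.[z] + y * F^`().[z] + y ^+ 2 * (Rp F y).[z].
Proof.
rewrite (@nderiv_taylor_wide _ (size F).+2) ?(leq_trans (leqnSn _) (leqnSn _)) //; last exact: mulrC.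
rewrite big_ord_recl big_ord_recl /= nderivn0 nderivn1 expr0 mulr1 expr1 [y * _]mulrC addrA.
congr (_ + _); rewrite /Rp horner_sum mulr_sumr; apply: eq_bigr => i _.
rewrite hornerM hornerC /bump /= !add1n [RHS]mulrCA -exprD add2n.
by [].
Qed.

Lemma polydiff (F : {poly int}) (a b : int) : exists w, F.[a] - F.[b] = (a - b) * w.
Proof.
exists (F^`().[b] + (a - b) * (Rp F (a - b)).[b]).
have := taylor2 F b (a - b). rewrite addrC subrK => ->. ring.
Qed.

Lemma P_lt N p k : (0 < N)%N -> (ppeval N p k < N)%N.
Proof. rewrite /ppeval => h; lia. Qed.

Lemma P_dec N p k : (0 < N)%N -> exists q, (ppeval N p k)%:Z = p.[k%:Z] - N%:Z * q.
Proof. rewrite /ppeval => h; exists (p.[k%:Z] %/ N%:Z)%Z; lia. Qed.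

Lemma P_cong N p k1 k2 : (0 < N)%N -> (k1 = k2 %[mod N])%N -> ppeval N p k1 = ppeval N p k2.
Proof.
move=> h hk.
have [q eq] : exists q, k1%:Z - k2%:Z = N%:Z * q.
  exists ((k1 %/ N)%N%:Z - (k2 %/ N)%N%:Z). lia.
have [w ew] := polydiff p k1%:Z k2%:Z.
rewrite /ppeval; have -> : p.[k1%:Z] = p.[k2%:Z] + N%:Z * (q * w).
  by rewrite mulrA -eq -ew; ring.
by rewrite addrC mulrC modzMDl.
Qed.

Lemma P_surj N p : (0 < N)%N -> perm_poly N p ->
  forall j, (j < N)%N -> exists2 k, (k < N)%N & ppeval N p k = j.
Proof.
move=> hN hp j hj.
pose sg (i : 'I_N) : 'I_N := Ordinal (@P_lt N p i hN).
have sg_inj : injective sg.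
  move=> i1 i2 /(congr1 val) /= e; apply: val_inj; apply: hp => //=; by rewrite inE.
have [g gK Kg] := injF_bij sg_inj.
exists (g (Ordinal hj)) => //.
by have /(congr1 val) := Kg (Ordinal hj).
Qed.

Lemma par (v : int) : exists w, v = 2 * w \/ v = 2 * w + 1.
Proof. exists (v %/ 2)%Z; lia. Qed.

Lemma FB N p : (0 < N)%N -> (4 %| N)%N -> perm_poly N p ->
  forall k0 x, oddz x -> oddz (p.[k0 + x] - p.[k0]).
Proof.
move=> hN h4 hp k0 x [wx ex].
have [v [ev|ev]] := par (p.[k0 + x] - p.[k0]); last by exists v.
exfalso.
have [N4 eN4] : exists N4, N = (N4 * 4)%N by exists (N %/ 4)%N; rewrite divnK.
have main : forall j, (j < N)%N -> (exists t, p.[k0] - j%:Z = 2 * t + 1) -> False.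
  move=> j hj [t et].
  have [k hk ek] := @P_surj N p hN hp j hj.
  have [q eq] := @P_dec N p k hN; rewrite ek in eq.
  have eNz : N%:Z = 4 * N4%:Z by rewrite eN4; lia.
  rewrite eNz in eq.
  have [m [em|em]] := par (k%:Z - k0).
  - have [w ew] := polydiff p k%:Z k0; rewrite em in ew. lia.
  - have [w ew] := polydiff p k%:Z (k0 + x).
    have e2 : k%:Z - (k0 + x) = 2 * (m - wx) by lia.
    rewrite e2 in ew. lia.
have [a0 [ea|ea]] := par p.[k0].
- apply: (main 1%N); first lia. exists (a0 - 1). lia.
- apply: (main 0%N); first lia. exists a0. lia.
Qed.

Lemma FA N p : (0 < N)%N -> (4 %| N)%N -> perm_poly N p ->
  forall k0, oddz (p^`().[k0]).
Proof.
move=> hN h4 hp k0.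
have [v [ev|ev]] := par (p^`().[k0]); last by exists v.
exfalso.
have [N4 eN4] : exists N4, N = (N4 * 4)%N by exists (N %/ 4)%N; rewrite divnK.
pose j := absz ((p.[k0] + 2) %% 4)%Z.
have hj : (j < N)%N by rewrite /j; lia.
have ej : p.[k0] + 2 = 4 * ((p.[k0] + 2) %/ 4)%Z + j%:Z by rewrite /j; lia.
have [k hk ek] := @P_surj N p hN hp j hj.
have [q eq] := @P_dec N p k hN; rewrite ek in eq.
have eNz : N%:Z = 4 * N4%:Z by rewrite eN4; lia.
rewrite eNz in eq.
have [m [em|em]] := par (k%:Z - k0).
- have ek0 : k%:Z = k0 + 2 * m by lia.
  have := taylor2 p k0 (2 * m). rewrite -ek0 ev => e.
  have e3 : (2 * m) ^+ 2 * (Rp p (2 * m)).[k0] = 4 * (m ^+ 2 * (Rp p (2 * m)).[k0]) by ring.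
  rewrite e3 in e. lia.
- have [w ew] := @FB N p hN h4 hp k0 _ (ex_intro _ m em).
  have ek0 : k0 + (k%:Z - k0) = k%:Z by ring.
  rewrite ek0 in ew. lia.
Qed.

Lemma core_alg (X Y a b A A' B B' Rk Rkx Fy Fxy al mu nu : int) :
  (exists w, b = 2 * w + 1) ->
  Fy = A + (2 * Y * b) * A' + (2 * Y * b) ^+ 2 * Rk ->
  Fxy = B + (2 * Y * b) * B' + (2 * Y * b) ^+ 2 * Rkx ->
  B - A = X * a * al -> B' - A' = X * a * mu -> Rkx - Rk = X * a * nu ->
  (exists w, A' = 2 * w + 1) -> (exists w, B' = 2 * w + 1) ->
  (exists w, B * B' - A * A' = X * (2 * w + 1)) ->
  exists q, Fxy ^+ 2 - B ^+ 2 - Fy ^+ 2 + A ^+ 2 = 4 * X * Y + 8 * X * Y * q.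
Proof.
move=> [b1 eb] -> -> eBA eBA' eR [a1 eA'] [b2 eB'] [w eM1].
set y := 2 * Y * b.
have eD : (B + y * B' + y ^+ 2 * Rkx) ^+ 2 - B ^+ 2 - (A + y * A' + y ^+ 2 * Rk) ^+ 2 + A ^+ 2
  = 2 * y * (B * B' - A * A') + y ^+ 2 * ((B' - A') * (B' + A'))
    + 2 * y ^+ 2 * ((B - A) * Rkx + A * (Rkx - Rk))
    + 2 * y ^+ 3 * ((B' - A') * Rkx + A' * (Rkx - Rk))
    + y ^+ 4 * ((Rkx - Rk) * (Rkx + Rk)).
  by rewrite /y; ring.
have eS : B' + A' = 2 * (a1 + b2 + 1) by rewrite eA' eB'; ring.
rewrite eD eM1 eBA eBA' eR eS /y eb.
exists (b1 * (2 * w + 1) + w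
  + Y * (2 * b1 + 1) ^+ 2 * a * mu * (a1 + b2 + 1)
  + Y * (2 * b1 + 1) ^+ 2 * a * (al * Rkx + A * nu)
  + 2 * Y ^+ 2 * (2 * b1 + 1) ^+ 3 * a * (mu * Rkx + A' * nu)
  + 2 * Y ^+ 3 * (2 * b1 + 1) ^+ 4 * a * nu * (Rkx + Rk)).
ring.
Qed.

Lemma M1_even (X' a A Ap r1 r2 ph B Bp : int) :
  (exists w, a = 2 * w + 1) -> (exists w, Ap = 2 * w + 1) ->
  B = A + (2 * X' * a) * Ap + (2 * X' * a) ^+ 2 * r1 ->
  Bp = Ap + (2 * X' * a) * (2 * ph) + (2 * X' * a) ^+ 2 * r2 ->
  exists w, B * Bp - A * Ap = (2 * X') * (2 * w + 1).
Proof.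
move=> [a1 ea] [al eA] -> ->.
set x := 2 * X' * a.
pose K := A * ph + A * X' * a * r2 + x * Ap * ph + X' * a * x * Ap * r2
  + X' * a * r1 * Ap + x ^+ 2 * r1 * ph + X' * a * x ^+ 2 * r1 * r2.
have -> : (A + x * Ap + x ^+ 2 * r1) * (Ap + x * (2 * ph) + x ^+ 2 * r2) - A * Ap
   = 2 * X' * (a * (Ap ^+ 2 + 2 * K)) by rewrite /K /x; ring.
clearbody K; rewrite ea eA.
exists (2 * a1 * (2 * al ^+ 2 + 2 * al + K) + a1 + (2 * al ^+ 2 + 2 * al + K)).
ring.
Qed.

Lemma M1_one (A Ap B Bp : int) :
  (exists w, B - A = 2 * w + 1) -> (exists w, Ap = 2 * w + 1) -> (exists w, Bp = 2 * w + 1) ->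
  exists w, B * Bp - A * Ap = 1 * (2 * w + 1).
Proof.
move=> [t et] [al eA] [be eB].
have -> : B = A + (2 * t + 1) by rewrite -et; ring.
rewrite eA eB; exists (2 * t * be + t + be + A * (be - al)); ring.
Qed.

Lemma deriv2_even (F : {poly int}) z : exists ph, F^`()^`().[z] = 2 * ph.
Proof.
exists (F^`N(2)).[z]. have -> : F^`()^`() = F^`(2) by rewrite derivnS derivn1.
rewrite nderivn_def hornerMn /=.
by rewrite mulrC -mulr_natr.
Qed.

Lemma Dpoly (F : {poly int}) (X Y a b k : int) :
  (forall z, oddz F^`().[z]) ->
  (X = 1 /\ (forall z x, oddz x -> oddz (F.[z + x] - F.[z]))) \/ (exists X', X = 2 * X') ->
  oddz a -> oddz b ->
  exists q, F.[k + X * a + 2 * Y * b] ^+ 2 - F.[k + X * a] ^+ 2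
          - F.[k + 2 * Y * b] ^+ 2 + F.[k] ^+ 2 = 4 * X * Y + 8 * X * Y * q.
Proof.
move=> hA hX ha hb.
set x := X * a; set y := 2 * Y * b.
have ex : k + x - k = X * a by rewrite /x; ring.
have [al eal] := polydiff F (k + x) k; rewrite ex in eal.
have [mu emu] := polydiff F^`() (k + x) k; rewrite ex in emu.
have [nu enu] := polydiff (Rp F y) (k + x) k; rewrite ex in enu.
apply: (@core_alg X Y a b _ (F^`().[k]) _ (F^`().[k + x]) ((Rp F y).[k]) ((Rp F y).[k + x])
   _ _ _ _ _ hb _ _ eal emu enu (hA _) (hA _)).
- exact: taylor2.
- exact: taylor2.
case: hX => [[X1 hB] | [X' eX]].
- have [t et] : oddz (F.[k + x] - F.[k]) by apply: hB; rewrite /x X1 mul1r.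
  move: (hA k) (hA (k + x)) => hA1 hA2.
  have := @M1_one _ _ _ _ (ex_intro _ t et) hA1 hA2. by rewrite X1.
- rewrite eX. have [ph eph] := deriv2_even F k.
  apply: (@M1_even X' a _ _ ((Rp F x).[k]) ((Rp F^`() x).[k]) ph _ _ ha (hA k)).
  + by rewrite -/x taylor2 /x eX.
  + by rewrite -/x taylor2 -eph /x eX.
Qed.

Lemma twoadic (d : nat) : (0 < d)%N -> exists t b, d = (2 ^ t * b.*2.+1)%N.
Proof.
elim: d {-2}d (leqnn d) => [|m IH] d hd d0; first by lia.
case/boolP: (odd d) => od.
  exists 0%N, d./2. by rewrite expn0 mul1n -{1}(odd_double_half d) od add1n.
have [d' ed] : exists d', d = d'.*2.
  by exists d./2; rewrite -{1}(odd_double_half d) (negbTE od) add0n.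
have [t [b eb]] : exists t b, d' = (2 ^ t * b.*2.+1)%N by apply: IH; lia.
exists t.+1, b. by rewrite ed eb expnS -mulnA mul2n.
Qed.

Lemma Dchoice (n : nat) (F : {poly int}) : (2 <= n)%N ->
  (forall z, oddz F^`().[z]) -> (forall z x, oddz x -> oddz (F.[z + x] - F.[z])) ->
  forall d : nat, (0 < d < 2 ^ n)%N -> exists c : nat, forall k : int, exists q,
   F.[k + c%:Z + d%:Z] ^+ 2 - F.[k + c%:Z] ^+ 2 - F.[k + d%:Z] ^+ 2 + F.[k] ^+ 2
     = (2 ^ n)%N%:Z + 2 * (2 ^ n)%N%:Z * q.
Proof.
move=> hn hA hB d /andP [d0 dN].
have [t [b eb]] := @twoadic d d0.
have tn : (t < n)%N.
  rewrite -(@ltn_exp2l 2) //; apply: leq_ltn_trans dN; rewrite eb leq_pmulr //.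
case: t eb tn => [|t'] eb tn.
-
  exists (2 ^ n.-1)%N => k.
  have oa : oddz d%:Z by exists b%:Z; rewrite eb expn0 mul1n; lia.
  have [q eq] := @Dpoly F 1 (2 ^ (n - 2))%N%:Z d%:Z 1 k hA (or_introl (conj erefl hB)) oa
     (ex_intro _ 0 erefl).
  exists q.
  have e1 : (2 ^ n)%N%:Z = 4 * (2 ^ (n - 2))%N%:Z.
    have en : n = (n - 2).+2 by lia.
    by rewrite {1}en !expnS !PoszM mulrA.
  have e2 : (2 ^ n.-1)%N%:Z = 2 * (2 ^ (n - 2))%N%:Z.
    have en : n.-1 = (n - 2).+1 by lia.
    by rewrite en expnS PoszM.
  rewrite e1 e2. rewrite !mul1r !mulr1 in eq.
  have -> : k + 2 * (2 ^ (n - 2))%N%:Z + d%:Z = k + d%:Z + 2 * (2 ^ (n - 2))%N%:Z by ring.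
  move: eq; set Y := (2 ^ (n - 2))%N%:Z => eq.
  rewrite (_ : 4 * Y + 2 * (4 * Y) * q = 4 * Y + 8 * Y * q); last by ring.
  rewrite -eq; ring.
-
  pose s := (n - t'.+2)%N.
  have ens : n = (s + t' + 2)%N by rewrite /s; lia.
  exists (2 ^ s)%N => k.
  have hX : ((2 ^ s)%N%:Z = 1 /\ (forall z x, oddz x -> oddz (F.[z + x] - F.[z])))
            \/ (exists X', (2 ^ s)%N%:Z = 2 * X').
    case: (s) => [|s']; [left; split => //; exact: hB | right; exists (2 ^ s')%N%:Z].
    by rewrite expnS PoszM.
  have [q eq] := @Dpoly F (2 ^ s)%N%:Z (2 ^ t')%N%:Z 1 (2 * b%:Z + 1) k hA hX
     (ex_intro _ 0 erefl) (ex_intro _ b%:Z erefl).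
  exists q.
  have e1 : (2 ^ n)%N%:Z = 4 * (2 ^ s)%N%:Z * (2 ^ t')%N%:Z.
    by rewrite ens -addnA expnD expnD (_ : 2 ^ 2 = 4)%N // !PoszM; ring.
  have e2 : d%:Z = 2 * (2 ^ t')%N%:Z * (2 * b%:Z + 1) by rewrite eb expnS; lia.
  rewrite e1 e2. rewrite mulr1 in eq.
  move: eq; set X := (2 ^ s)%N%:Z; set Y := (2 ^ t')%N%:Z => eq.
  rewrite (_ : 4 * X * Y + 2 * (4 * X * Y) * q = 4 * X * Y + 8 * X * Y * q); last by ring.
  by rewrite -eq.
Qed.

Section Om.
Variable N : nat.
Hypothesis hN : (0 < N)%N.
Local Notation om := (halfxi N).

Lemma om_N : om ^+ N = -1.
Proof. by rewrite /halfxi exprVn rootCK // invrN1. Qed.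

Lemma om_neq0 : om != 0.
Proof.
apply/eqP => h. have := om_N. rewrite h expr0n. case: N hN => // m _ /=.
move/eqP; rewrite eq_sym oppr_eq0 oner_eq0 //.
Qed.

Lemma om_norm : `|om| = 1.
Proof. by rewrite /halfxi normfV norm_rootC normrN1 rootC1 // invr1. Qed.

Lemma om_add (a b : int) : om ^ (a + b) = om ^ a * om ^ b.
Proof. exact: expfzDr om_neq0. Qed.

Lemma om_2N (q : int) : om ^ (2 * N%:Z * q) = 1.
Proof.
rewrite -exprz_exp (_ : om ^ (2 * N%:Z) = 1) ?exp1rz //.
by rewrite -PoszM -exprnP mulnC exprM om_N expr2 mulrN1 opprK.
Qed.

Lemma om_Nz : om ^ (N%:Z) = -1.
Proof. by rewrite -exprnP om_N. Qed.

Lemma om_conj (a : int) : (om ^ a)^* = om ^ (- a).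
Proof.
have omu : om \is a GRing.unit by rewrite unitfE om_neq0.
rewrite (rmorphXz _ _ omu) -exprz_inv; congr (_ ^ _).
have h : om * om^* = 1 by rewrite -normCK om_norm expr1n.
by apply: (mulfI om_neq0); rewrite h (mulfV om_neq0).
Qed.

Lemma om_normz (a : int) : `|om ^ a| = 1.
Proof.
apply/eqP; rewrite -(@pexpr_eq1 _ _ 2) // normCK om_conj -om_add subrr.
by [].
Qed.
End Om.

Lemma zc_form N u l j : (N %% 2 = 0)%N ->
  zc N u l j = halfxi N ^ (u * (j%:Z ^+ 2 + 2 * l * j%:Z)).
Proof. by move=> h; rewrite /zc h mul0r addr0. Qed.

Lemma G_form N N2 p l z : (0 < N)%N -> N%:Z = 2 * N2 ->
  exists r, (ppeval N p z)%:Z ^+ 2 + 2 * l * (ppeval N p z)%:Z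
     = (p.[z%:Z] + l) ^+ 2 - l ^+ 2 + 2 * N%:Z * r.
Proof.
move=> hN eN; have [q eq] := @P_dec N p z hN.
exists (- q * (p.[z%:Z] + l) + N2 * q ^+ 2).
rewrite eq eN. ring.
Qed.

Lemma sum_zero N (T : nat -> algC) c : (0 < N)%N ->
  (forall k, T ((k + c) %% N)%N = - T k) -> \sum_(k < N) T k = 0.
Proof.
move=> hN hT.
pose f (i : 'I_N) : 'I_N := Ordinal (ltn_pmod (i + c) hN).
have finj : injective f.
  move=> i1 i2 /(congr1 val) /= e; apply: val_inj => /=.
  move/eqP: e; rewrite eqn_modDr !modn_small //; by move/eqP.
have hS : \sum_(k < N) T k = - \sum_(k < N) T k.
  rewrite [LHS](reindex_inj finj) /= -sumrN; apply: eq_bigr => i _; exact: hT.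
have : (\sum_(k < N) T k) *+ 2 = 0 by rewrite mulr2n {1}hS addNr.
by move/eqP; rewrite mulrn_eq0 /= => /eqP.
Qed.

Lemma part1 n u l p : (2 <= n)%N -> oddz u -> perm_poly (2 ^ n) p ->
  CAZAC (2 ^ n) (fun k => zc (2 ^ n) u l (ppeval (2 ^ n) p k)).
Proof.
move=> hn [u1 eu] hp.
have hN : (0 < 2 ^ n)%N by rewrite expn_gt0.
have h4 : (4 %| 2 ^ n)%N by rewrite (_ : 4 = 2 ^ 2)%N // dvdn_exp2l.
have hz : (2 ^ n %% 2 = 0)%N.
  by rewrite (_ : n = (n - 1).+1) ?expnS ?modnMr //; lia.
have eN2 : (2 ^ n)%N%:Z = 2 * (2 ^ (n - 1))%N%:Z.
  by rewrite {1}(_ : n = (n - 1).+1) ?expnS ?PoszM //; lia.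
split.
  by move=> k _; rewrite zc_form // om_normz.
move=> d hd.
pose F := p + l%:P.
have eF z : F.[z] = p.[z] + l by rewrite /F hornerD hornerC.
have eF' : F^`() = p^`() by rewrite /F derivD derivC addr0.
have hA z : oddz F^`().[z] by rewrite eF'; exact: (@FA (2 ^ n) p hN h4 hp).
have hB z x : oddz x -> oddz (F.[z + x] - F.[z]).
  rewrite !eF (_ : p.[z + x] + l - (p.[z] + l) = p.[z + x] - p.[z]); last by ring.
  exact: (@FB (2 ^ n) p hN h4 hp).
have [c hc] := @Dchoice n F hn hA hB d hd.
set N := (2 ^ n)%N in hN h4 hz eN2 hp hc *.
set y := fun k => _.
pose G (j : nat) : int := j%:Z ^+ 2 + 2 * l * j%:Z.
have Tform k : y k * (y ((k + d) %% N)%N)^* =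
    halfxi N ^ (u * (G (ppeval N p k) - G (ppeval N p (k + d)))).
  rewrite /y !zc_form // om_conj // -om_add // (@P_cong N p ((k + d) %% N) (k + d)) ?modn_mod //.
  by rewrite /G mulrBr.
rewrite /autocorr; apply: (@sum_zero N (fun k => y k * (y ((k + d) %% N)%N)^*) c hN) => k /=.
rewrite !Tform (@P_cong N p ((k + c) %% N) (k + c)) ?modn_mod //.
rewrite (@P_cong N p ((k + c) %% N + d) (k + c + d)) ?modnDml //.
have [r1 e1] := @G_form N _ p l (k + c) hN eN2.
have [r2 e2] := @G_form N _ p l (k + c + d) hN eN2.
have [r3 e3] := @G_form N _ p l k hN eN2.
have [r4 e4] := @G_form N _ p l (k + d) hN eN2.
have [q eq] := hc k%:Z.
rewrite /G e1 e2 e3 e4.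
rewrite -!eF !PoszD.
rewrite -!PoszD in eq.
set A0 := F.[k%:Z] in eq *.
set Ac := F.[(k + c)%N%:Z] in eq *.
set Ad := F.[(k + d)%N%:Z] in eq *.
set Acd := F.[(k + c + d)%N%:Z] in eq *.
have eD : Acd ^+ 2 = N%:Z + 2 * N%:Z * q + Ac ^+ 2 + Ad ^+ 2 - A0 ^+ 2 by rewrite -eq; ring.
rewrite (_ : u * (Ac ^+ 2 - l ^+ 2 + 2 * N%:Z * r1 - (Acd ^+ 2 - l ^+ 2 + 2 * N%:Z * r2))
   = u * (A0 ^+ 2 - l ^+ 2 + 2 * N%:Z * r3 - (Ad ^+ 2 - l ^+ 2 + 2 * N%:Z * r4)) + N%:Z
     + 2 * N%:Z * (- (u1 + 1) - u * q + u * (r1 - r2 - r3 + r4))).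
  by rewrite !om_add // om_Nz // om_2N // mulr1 mulrN1.
rewrite eD eu; ring.
Qed.

Lemma CAZAC_ext N (y1 y2 : nat -> algC) : (0 < N)%N ->
  (forall k, (k < N)%N -> y1 k = y2 k) -> CAZAC N y1 -> CAZAC N y2.
Proof.
move=> hN he [h1 h2]; split.
  by move=> k hk; rewrite -he // h1.
move=> d hd; rewrite -(h2 d hd) /autocorr; apply: eq_bigr => i _.
by rewrite !he // ltn_pmod.
Qed.

Lemma pp_comp N p q k : (0 < N)%N -> ppeval N (p \Po q) k = ppeval N p (ppeval N q k).
Proof.
move=> hN; have [r er] := @P_dec N q k hN.
have [w ew] := polydiff p q.[k%:Z] (ppeval N q k)%:Z.
rewrite /ppeval horner_comp -/(ppeval N q k).
have -> : p.[q.[k%:Z]] = p.[(ppeval N q k)%:Z] + N%:Z * (r * w).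
  rewrite er in ew *.
  have e' : q.[k%:Z] - (q.[k%:Z] - N%:Z * r) = N%:Z * r by ring.
  rewrite e' in ew. rewrite mulrA -ew. ring.
by rewrite addrC mulrC modzMDl.
Qed.

Lemma pp_X N k : (k < N)%N -> ppeval N 'X k = k.
Proof. rewrite /ppeval hornerX => h. by rewrite modz_small ?absz_nat. Qed.

Lemma inv_poly N p : (0 < N)%N -> perm_poly N p ->
  exists q, perm_poly N q /\ forall k, (k < N)%N -> ppinv N p k = ppeval N q k.
Proof.
move=> hN hp.
pose sg (i : 'I_N) : 'I_N := Ordinal (@P_lt N p i hN).
have sg_inj : injective sg.
  move=> i1 i2 /(congr1 val) /= e; apply: val_inj; apply: hp => //=; by rewrite inE.
pose s := perm sg_inj.
pose pit j := iter j (fun q => p \Po q) 'X.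
have hpit j k (hk : (k < N)%N) : ppeval N (pit j) k = val ((s ^+ j)%g (Ordinal hk)).
  elim: j => [|j IH]; first by rewrite /= perm1 pp_X.
  rewrite /= pp_comp // IH !permX /= permE.
  by [].
exists (pit (#[s]%g).-1); split.
  move=> k1 k2; rewrite !inE => h1 h2.
  rewrite (hpit _ _ h1) (hpit _ _ h2) => /val_inj /perm_inj [] //.
move=> k hk.
rewrite (hpit _ _ hk) -invg_expg.
set j := val ((s^-1)%g (Ordinal hk)).
have hj : (j < N)%N by rewrite /j ltn_ord.
have ePj : ppeval N p j = k.
  have := permKV s (Ordinal hk). rewrite {1}permE => /(congr1 val) /=. by [].
rewrite /ppinv.
have -> : k = nth 0%N (map (ppeval N p) (iota 0 N)) j.
  by rewrite (nth_map 0%N) ?size_iota // nth_iota // add0n.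
rewrite index_uniq ?size_map ?size_iota //.
rewrite map_inj_in_uniq ?iota_uniq //.
move=> a b; rewrite !mem_iota !add0n => /andP [_ ha] /andP [_ hb]; exact: hp.
Qed.

Lemma part2 n u l p : (2 <= n)%N -> oddz u -> perm_poly (2 ^ n) p ->
  CAZAC (2 ^ n) (fun k => zc (2 ^ n) u l (ppinv (2 ^ n) p k)).
Proof.
move=> hn hu hp.
have hN : (0 < 2 ^ n)%N by rewrite expn_gt0.
have [q [hq eq]] := @inv_poly _ p hN hp.
apply: (@CAZAC_ext _ _ _ hN _ (@part1 n u l q hn hu hq)).
by move=> k hk; rewrite eq.
Qed.

Lemma coprime_odd n u : (1 <= n)%N -> coprimez u (2 ^ n)%N%:Z -> oddz u.
Proof.
move=> hn hc; have [w [ew|ew]] := par u; last by exists w.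
exfalso; move: hc; rewrite /coprimez => /eqP hg.
have : (2 %| gcdz u (2 ^ n)%N%:Z)%Z.
  rewrite dvdz_gcd; apply/andP; split; apply/dvdzP.
    by exists w; rewrite ew mulrC.
  exists (2 ^ (n - 1))%N%:Z; rewrite -PoszM mulnC -expnS; congr (Posz (2 ^ _)); lia.
by rewrite hg.
Qed.

Theorem theorem2 (n : nat) (u l : int) (p : {poly int}) :
  (2 <= n)%N ->
  coprimez u (2 ^ n)%N%:Z ->
  perm_poly (2 ^ n) p ->
  CAZAC (2 ^ n) (fun k => zc (2 ^ n) u l (ppeval (2 ^ n) p k)) /\
  CAZAC (2 ^ n) (fun k => zc (2 ^ n) u l (ppinv (2 ^ n) p k)).
Proof.
move=> hn hc hp.
have hu : oddz u by apply: (@coprime_odd n); [lia | exact: hc].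
split; [exact: part1 | exact: part2].
Qed.
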